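(* Let $h>0$, $\mathbb{T}:=\{0,h,2h,\ldots\}$, $n\in\mathbb{N}$, and $p_0,\ldots,p_{n-1}\in\mathbb{C}\setminus\{-\tfrac1h\}$; define $p:\mathbb{T}\to\mathbb{C}$ by $p(t)=p_k$ if $\tfrac th\equiv k\pmod n$, $k\in\{0,\ldots,n-1\}$, where $p$ is periodic with period $n$ and not periodic with any smaller period. Consider $$\Delta_h x(t)-p(t)x(t)=0,\qquad t\in\mathbb{T},\qquad(\ast)$$ with $\Delta_hx(t):=\frac{x(t+h)-x(t)}{h}$. Let $e_p(t):=\prod_{j=0}^{t/h-1}(1+hp(jh))$ (empty product $=1$), so $|e_p(nh)|=\prod_{i=0}^{n-1}|1+hp_i|$. For $k\in\{0,\ldots,n-1\}$ let $$S_k:=\sum_{j=1}^{n}\frac{1}{\prod_{i=0}^{j-1}|1+hp_{(k+i)\bmod n}|}.$$ Assume $0<|e_p(nh)|\ne1$. Let $\varepsilon>0$ be fixed and $\phi:\mathbb{T}\to\mathbb{C}$ satisfy $|\Delta_h\phi(t)-p(t)\phi(t)|\le\varepsilon$ for all $t\in\mathbb{T}$. Then: (i) If $|e_p(nh)|>1$, then $\lim_{t\to\infty}\frac{\phi(t)}{e_p(t)}$ exists, and $x(t):=\left(\lim_{s\to\infty}\frac{\phi(s)}{e_p(s)}\right)e_p(t)$ is the unique solution of $(\ast)$ with $|\phi(t)-x(t)|\le K_n\varepsilon$ for all $t\in\mathbb{T}$, where $$K_n:=\frac{h|e_p(nh)|}{-1+|e_p(nh)|}\max\{S_0,S_1,\ldots,S_{n-1}\};$$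 moreover $K_n$ is the minimum Ulam stability constant for $(\ast)$. (ii) If $0<|e_p(nh)|<1$, then any solution $x$ of $(\ast)$ with $|\phi(0)-x(0)|<\varepsilon h\frac{|e_p(nh)|S_0}{1-|e_p(nh)|}$ satisfies $$|\phi(t)-x(t)|<\frac{\varepsilon h|e_p(nh)|}{1-|e_p(nh)|}\max\{S_0,S_1,\ldots,S_{n-1}\}$$ for all $t\in\mathbb{T}$.
   Context: A constant $K>0$ is an Ulam stability constant for $(\ast)$ on $\mathbb{T}$ if for every $\varepsilon>0$ and every $\phi:\mathbb{T}\to\mathbb{C}$ with $|\Delta_h\phi(t)-p(t)\phi(t)|\le\varepsilon$ for all $t\in\mathbb{T}$, there is a solution $x$ of $(\ast)$ with $|\phi(t)-x(t)|\le K\varepsilon$ for all $t\in\mathbb{T}$. ''Minimum'' means $K_n$ is such a constant and no positive number smaller than $K_n$ is. Explicitly, $S_0=\frac{1}{|1+hp_0|}+\frac{1}{|1+hp_0||1+hp_1|}+\cdots+\frac{1}{|1+hp_0|\cdots|1+hp_{n-1}|}$ and $S_k$ is the analogous sum starting at $p_k$ and cycling through $p_{n-1},p_0,\ldots,p_{k-1}$. *)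

(* Defs.v *)
From Stdlib Require Import Reals List Arith.
From Coquelicot Require Import Coquelicot.
Import ListNotations.

(* Time scale T = {0, h, 2h, ...} is indexed by m : nat, t = m*h.
   A function T -> C is represented as x : nat -> C with x m = x(m h). *)

Definition pper (n : nat) (pk : nat -> C) (m : nat) : C := pk (m mod n).

Definition ep (h : R) (n : nat) (pk : nat -> C) (m : nat) : C :=
  fold_right Cmult (RtoC 1)
    (map (fun j => Cplus (RtoC 1) (Cmult (RtoC h) (pper n pk j))) (seq 0 m)).

Definition Dh (h : R) (x : nat -> C) (m : nat) : C :=
  Cdiv (Cminus (x (S m)) (x m)) (RtoC h).

Definition is_solution (h : R) (n : nat) (pk : nat -> C) (x : nat -> C) : Prop :=
  forall m : nat, Cminus (Dh h x m) (Cmult (pper n pk m) (x m)) = RtoC 0.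

Definition Sk (h : R) (n : nat) (pk : nat -> C) (k : nat) : R :=
  fold_right Rplus 0
    (map (fun j => / fold_right Rmult 1
            (map (fun i => Cmod (Cplus (RtoC 1) (Cmult (RtoC h) (pk ((k + i) mod n)))))
                 (seq 0 j)))
         (seq 1 n)).

(* max{S_0, ..., S_{n-1}} (all S_k > 0, so the default 0 is irrelevant for n >= 1) *)
Definition Smax (h : R) (n : nat) (pk : nat -> C) : R :=
  fold_right Rmax 0 (map (Sk h n pk) (seq 0 n)).

Definition ulam_constant (h : R) (n : nat) (pk : nat -> C) (K : R) : Prop :=
  0 < K /\
  forall eps : R, 0 < eps ->
  forall phi : nat -> C,
    (forall m, Cmod (Cminus (Dh h phi m) (Cmult (pper n pk m) (phi m))) <= eps) ->
    exists x : nat -> C, is_solution h n pk x /\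
      forall m, Cmod (Cminus (phi m) (x m)) <= K * eps.

Definition min_ulam_constant (h : R) (n : nat) (pk : nat -> C) (K : R) : Prop :=
  ulam_constant h n pk K /\
  forall K' : R, 0 < K' -> K' < K -> ~ ulam_constant h n pk K'.

(* Main.v *)
Require Import Defs.
From Stdlib Require Import Reals List Arith Lia Lra.
From Coquelicot Require Import Coquelicot.
Open Scope R_scope.

Fixpoint rprod (g : nat -> R) (j : nat) : R :=
  match j with O => 1 | S j => rprod g j * g j end.
Fixpoint rsum (g : nat -> R) (j : nat) : R :=
  match j with O => 0 | S j => rsum g j + g j end.
Fixpoint cprod (g : nat -> C) (j : nat) : C :=
  match j with O => RtoC 1 | S j => Cmult (cprod g j) (g j) end.

Lemma rprod_ext f g j : (forall i, f i = g i) -> rprod f j = rprod g j.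
Proof. intros H; induction j; simpl; [reflexivity| rewrite IHj, H; reflexivity]. Qed.
Lemma rsum_ext f g j : (forall i, f i = g i) -> rsum f j = rsum g j.
Proof. intros H; induction j; simpl; [reflexivity| rewrite IHj, H; reflexivity]. Qed.
Lemma cprod_ext f g j : (forall i, f i = g i) -> cprod f j = cprod g j.
Proof. intros H; induction j; simpl; [reflexivity| rewrite IHj, H; reflexivity]. Qed.

Lemma rprod_front g j : rprod g (S j) = g 0%nat * rprod (fun i => g (S i)) j.
Proof.
  induction j. simpl; ring.
  change (rprod g (S (S j))) with (rprod g (S j) * g (S j)). rewrite IHj. simpl; ring.
Qed.
Lemma rsum_front g j : rsum g (S j) = g 0%nat + rsum (fun i => g (S i)) j.
Proof.
  induction j. simpl; ring.
  change (rsum g (S (S j))) with (rsum g (S j) + g (S j)). rewrite IHj. simpl; ring.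
Qed.
Lemma cprod_front g j : cprod g (S j) = Cmult (g 0%nat) (cprod (fun i => g (S i)) j).
Proof.
  induction j. simpl. ring.
  change (cprod g (S (S j))) with (Cmult (cprod g (S j)) (g (S j))). rewrite IHj. simpl; ring.
Qed.

Lemma fold_rprod g s j : fold_right Rmult 1 (map g (seq s j)) = rprod (fun i => g (s + i)%nat) j.
Proof.
  revert s; induction j; intros s. reflexivity.
  rewrite rprod_front. simpl. rewrite IHj. rewrite Nat.add_0_r. f_equal.
  apply rprod_ext; intros i; f_equal; lia.
Qed.
Lemma fold_rsum g s j : fold_right Rplus 0 (map g (seq s j)) = rsum (fun i => g (s + i)%nat) j.
Proof.
  revert s; induction j; intros s. reflexivity.
  rewrite rsum_front. simpl. rewrite IHj. rewrite Nat.add_0_r. f_equal.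
  apply rsum_ext; intros i; f_equal; lia.
Qed.
Lemma fold_cprod g s j : fold_right Cmult (RtoC 1) (map g (seq s j)) = cprod (fun i => g (s + i)%nat) j.
Proof.
  revert s; induction j; intros s. reflexivity.
  rewrite cprod_front. simpl. rewrite IHj. rewrite Nat.add_0_r. f_equal.
  apply cprod_ext; intros i; f_equal; lia.
Qed.

Lemma Cmod_cprod g j : Cmod (cprod g j) = rprod (fun i => Cmod (g i)) j.
Proof. induction j; simpl. apply Cmod_1. rewrite Cmod_mult, IHj; reflexivity. Qed.

Lemma rsum_scale c g j : rsum (fun i => c * g i) j = c * rsum g j.
Proof. induction j; simpl. ring. rewrite IHj; ring. Qed.
Lemma rprod_pos g j : (forall i, 0 < g i) -> 0 < rprod g j.
Proof. intros H; induction j; simpl. lra. apply Rmult_lt_0_compat; auto. Qed.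
Lemma rsum_pos g j : (forall i, 0 < g i) -> (0 < j)%nat -> 0 < rsum g j.
Proof.
  intros H Hj; induction j. lia. simpl. destruct j. simpl. specialize (H 0%nat); lra.
  assert (0 < rsum g (S j)) by (apply IHj; lia). specialize (H (S j)); lra.
Qed.

Definition aa h n pk m : C := Cplus (RtoC 1) (Cmult (RtoC h) (pper n pk m)).
Definition al h n pk m : R := Cmod (aa h n pk m).
Definition Q h n pk m : R := Cmod (ep h n pk m).

Lemma ep_eq h n pk m : ep h n pk m = cprod (aa h n pk) m.
Proof. unfold ep. rewrite fold_cprod. reflexivity. Qed.
Lemma ep_0 h n pk : ep h n pk 0 = RtoC 1.
Proof. reflexivity. Qed.
Lemma ep_S h n pk m : ep h n pk (S m) = Cmult (ep h n pk m) (aa h n pk m).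
Proof. rewrite !ep_eq; reflexivity. Qed.
Lemma Q_S h n pk m : Q h n pk (S m) = Q h n pk m * al h n pk m.
Proof. unfold Q, al. rewrite ep_S, Cmod_mult; reflexivity. Qed.
Lemma Q_0 h n pk : Q h n pk 0 = 1.
Proof. unfold Q. rewrite ep_0. apply Cmod_1. Qed.
Lemma Q_eq h n pk m : Q h n pk m = rprod (al h n pk) m.
Proof. unfold Q. rewrite ep_eq, Cmod_cprod. reflexivity. Qed.

Lemma pper_add_n n pk m : pper n pk (m + n) = pper n pk m.
Proof. unfold pper. replace (m + n)%nat with (m + 1 * n)%nat by lia. rewrite Nat.Div0.mod_add. reflexivity. Qed.
Lemma pper_mod n pk m : pper n pk (m mod n) = pper n pk m.
Proof. unfold pper. rewrite Nat.Div0.mod_mod. reflexivity. Qed.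
Lemma al_add_n h n pk m : al h n pk (m + n) = al h n pk m.
Proof. unfold al, aa. rewrite pper_add_n. reflexivity. Qed.
Lemma al_mod h n pk m : al h n pk (m mod n) = al h n pk m.
Proof. unfold al, aa. rewrite pper_mod. reflexivity. Qed.

Lemma ep_add_n h n pk m : ep h n pk (m + n) = Cmult (ep h n pk n) (ep h n pk m).
Proof.
  induction m. simpl. rewrite ep_0. ring.
  change (S m + n)%nat with (S (m + n)). rewrite !ep_S, IHm.
  unfold aa. rewrite pper_add_n. ring.
Qed.
Lemma Q_add_n h n pk m : Q h n pk (m + n) = Q h n pk n * Q h n pk m.
Proof. unfold Q. rewrite ep_add_n, Cmod_mult. reflexivity. Qed.
Lemma Q_mul h n pk k r : Q h n pk (k * n + r) = Q h n pk n ^ k * Q h n pk r.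
Proof.
  induction k. simpl. ring.
  replace (S k * n + r)%nat with ((k * n + r) + n)%nat by lia.
  rewrite Q_add_n, IHk. simpl. ring.
Qed.

Lemma al_ge0 h n pk m : 0 <= al h n pk m.
Proof. apply Cmod_ge_0. Qed.

Lemma Q_zero h n pk j : al h n pk j = 0 -> forall k, (j < k)%nat -> Q h n pk k = 0.
Proof.
  intros H k Hk. induction k. lia.
  rewrite Q_S. destruct (Nat.eq_dec j k). subst. rewrite H; ring.
  rewrite IHk by lia. ring.
Qed.

Lemma al_pos h n pk m : (0 < n)%nat -> 0 < Q h n pk n -> 0 < al h n pk m.
Proof.
  intros Hn HE. rewrite <- al_mod. destruct (al_ge0 h n pk (m mod n)) as [H|H]; auto.
  exfalso. assert (Q h n pk n = 0). apply (Q_zero h n pk (m mod n)). auto.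
  apply Nat.mod_upper_bound; lia. lra.
Qed.
Lemma Q_pos h n pk m : (0 < n)%nat -> 0 < Q h n pk n -> 0 < Q h n pk m.
Proof.
  intros Hn HE. induction m. rewrite Q_0; lra. rewrite Q_S.
  apply Rmult_lt_0_compat; auto. apply al_pos; auto.
Qed.
Lemma ep_neq0 h n pk m : (0 < n)%nat -> 0 < Q h n pk n -> ep h n pk m <> RtoC 0.
Proof. intros Hn HE. apply Cmod_gt_0. apply Q_pos; auto. Qed.
Lemma aa_neq0 h n pk m : (0 < n)%nat -> 0 < Q h n pk n -> aa h n pk m <> RtoC 0.
Proof. intros Hn HE. apply Cmod_gt_0. apply al_pos; auto. Qed.

Definition PP h n pk k j := rprod (fun i => al h n pk (k + i)) j.

Lemma Sk_eq h n pk k : Sk h n pk k = rsum (fun j => / PP h n pk k (S j)) n.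
Proof.
  unfold Sk. rewrite fold_rsum. apply rsum_ext; intros j.
  rewrite fold_rprod. reflexivity.
Qed.

Lemma PP_front h n pk k j : PP h n pk k (S j) = al h n pk k * PP h n pk (S k) j.
Proof.
  unfold PP. rewrite rprod_front. rewrite Nat.add_0_r. f_equal. apply rprod_ext; intros; f_equal; lia.
Qed.

Lemma PP_n h n pk k : (0 < n)%nat -> 0 < Q h n pk n -> PP h n pk k n = Q h n pk n.
Proof.
  intros Hn HE. induction k.
  - unfold PP. rewrite Q_eq. apply rprod_ext; reflexivity.
  - assert (H1 : PP h n pk k (S n) = al h n pk k * PP h n pk (S k) n) by apply PP_front.
    assert (H2 : PP h n pk k (S n) = PP h n pk k n * al h n pk k).
    { unfold PP. simpl. rewrite al_add_n. reflexivity. }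
    assert (0 < al h n pk k) by (apply al_pos; auto).
    rewrite IHk in H2. rewrite H2 in H1.
    apply (Rmult_eq_reg_l (al h n pk k)); [|lra]. lra.
Qed.

Lemma PP_pos h n pk k j : (0 < n)%nat -> 0 < Q h n pk n -> 0 < PP h n pk k j.
Proof. intros; apply rprod_pos; intros; apply al_pos; auto. Qed.

Lemma Sk_rec h n pk m : (0 < n)%nat -> 0 < Q h n pk n ->
  al h n pk m * Sk h n pk m = 1 + Sk h n pk (S m) - / Q h n pk n.
Proof.
  intros Hn HE.
  assert (Ha : 0 < al h n pk m) by (apply al_pos; auto).
  rewrite Sk_eq.
  rewrite (rsum_ext _ (fun j => / al h n pk m * / PP h n pk (S m) j)).
  2:{ intros j. rewrite PP_front. rewrite Rinv_mult. reflexivity. }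
  rewrite rsum_scale.
  set (G := fun j => / PP h n pk (S m) j).
  assert (E1 : rsum G (S n) = rsum G n + G n) by reflexivity.
  rewrite rsum_front in E1.
  assert (G0 : G 0%nat = 1). { unfold G, PP. simpl. lra. }
  assert (Gn : G n = / Q h n pk n). { unfold G. rewrite PP_n; auto. }
  assert (GS : rsum (fun i => G (S i)) n = Sk h n pk (S m)). { rewrite Sk_eq. reflexivity. }
  rewrite G0, GS, Gn in E1.
  replace (rsum G n) with (1 + Sk h n pk (S m) - / Q h n pk n) by lra.
  field. lra.
Qed.

Lemma Sk_pos h n pk m : (0 < n)%nat -> 0 < Q h n pk n -> 0 < Sk h n pk m.
Proof.
  intros Hn HE. rewrite Sk_eq. apply rsum_pos; auto. intros; apply Rinv_0_lt_compat, PP_pos; auto.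
Qed.

Lemma Sk_mod h n pk m : Sk h n pk (m mod n) = Sk h n pk m.
Proof.
  unfold Sk. f_equal. apply map_ext; intros j. f_equal. f_equal. apply map_ext; intros i.
  rewrite Nat.Div0.add_mod_idemp_l. reflexivity.
Qed.

Lemma fold_max_ge x l : In x l -> x <= fold_right Rmax 0 l.
Proof.
  induction l; simpl. tauto. intros [<-|H]. apply Rmax_l.
  eapply Rle_trans. apply IHl; auto. apply Rmax_r.
Qed.

Lemma fold_max_in l : l <> nil -> (forall x, In x l -> 0 <= x) -> In (fold_right Rmax 0 l) l.
Proof.
  induction l as [|a l IH]; intros Hl Hp. congruence.
  simpl. destruct l as [|b l'].
  - simpl. left. symmetry. apply Rmax_left. apply Hp. simpl; auto.
  - set (y := fold_right Rmax 0 (b :: l')).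
    assert (Hy : In y (b :: l')) by (apply IH; [congruence| intros; apply Hp; simpl; auto]).
    unfold Rmax. destruct (Rle_dec a y). right; exact Hy. left; auto.
Qed.

Lemma Sk_le_Smax h n pk m : (0 < n)%nat -> Sk h n pk m <= Smax h n pk.
Proof.
  intros Hn. rewrite <- Sk_mod. unfold Smax. apply fold_max_ge. apply in_map. apply in_seq.
  split. lia. simpl. apply Nat.mod_upper_bound; lia.
Qed.

Lemma Smax_attained h n pk : (0 < n)%nat -> 0 < Q h n pk n ->
  exists k, (k < n)%nat /\ Sk h n pk k = Smax h n pk.
Proof.
  intros Hn HE. unfold Smax.
  assert (H : In (fold_right Rmax 0 (map (Sk h n pk) (seq 0 n))) (map (Sk h n pk) (seq 0 n))).
  { apply fold_max_in. destruct n. lia. simpl. congruence.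
    intros x Hx. apply in_map_iff in Hx. destruct Hx as [k [<- _]]. left; apply Sk_pos; auto. }
  apply in_map_iff in H. destruct H as [k [Hk Hin]]. apply in_seq in Hin.
  exists k. split. lia. auto.
Qed.

Lemma RtoC_neq0 h : h <> 0 -> RtoC h <> RtoC 0.
Proof. intros H E. apply (f_equal fst) in E. simpl in E. lra. Qed.

Lemma sol_step h n pk x m : 0 < h -> is_solution h n pk x ->
  x (S m) = Cmult (aa h n pk m) (x m).
Proof.
  intros Hh Hs. specialize (Hs m). unfold Dh, aa in *.
  assert (Hh' : RtoC h <> RtoC 0) by (apply RtoC_neq0; lra).
  replace (x (S m)) with (Cplus (Cmult (RtoC h) (Cminus (Cdiv (Cminus (x (S m)) (x m)) (RtoC h)) (Cmult (pper n pk m) (x m))))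
    (Cmult (Cplus (RtoC 1) (Cmult (RtoC h) (pper n pk m))) (x m))).
  rewrite Hs. ring. field. auto.
Qed.

Lemma sol_form h n pk x m : 0 < h -> is_solution h n pk x ->
  x m = Cmult (x 0%nat) (ep h n pk m).
Proof.
  intros Hh Hs. induction m. rewrite ep_0. ring.
  rewrite sol_step with (h:=h) (n:=n) (pk:=pk); auto. rewrite IHm, ep_S. ring.
Qed.

Lemma mult_ep_sol h n pk L : 0 < h -> is_solution h n pk (fun m => Cmult L (ep h n pk m)).
Proof.
  intros Hh m. unfold Dh. rewrite ep_S. unfold aa.
  assert (Hh' : RtoC h <> RtoC 0) by (apply RtoC_neq0; lra).
  field. auto.
Qed.

Definition ff h n pk (phi : nat -> C) m : C := Cminus (phi (S m)) (Cmult (aa h n pk m) (phi m)).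

Lemma ff_bound h n pk phi eps m : 0 < h ->
  Cmod (Cminus (Dh h phi m) (Cmult (pper n pk m) (phi m))) <= eps ->
  Cmod (ff h n pk phi m) <= h * eps.
Proof.
  intros Hh Hb.
  assert (Hh' : RtoC h <> RtoC 0) by (apply RtoC_neq0; lra).
  assert (E : Cminus (Dh h phi m) (Cmult (pper n pk m) (phi m)) = Cdiv (ff h n pk phi m) (RtoC h)).
  { unfold Dh, ff, aa. field. auto. }
  rewrite E, Cmod_div in Hb by auto. rewrite Cmod_R, Rabs_pos_eq in Hb by lra.
  apply (Rmult_le_compat_l h) in Hb; [|lra].
  replace (h * (Cmod (ff h n pk phi m) / h)) with (Cmod (ff h n pk phi m)) in Hb by (field; lra). lra.
Qed.

Lemma part2 h n pk eps phi x : 0 < h -> (0 < n)%nat -> 0 < Q h n pk n -> Q h n pk n < 1 -> 0 < eps ->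
  (forall m, Cmod (Cminus (Dh h phi m) (Cmult (pper n pk m) (phi m))) <= eps) ->
  is_solution h n pk x ->
  Cmod (Cminus (phi 0%nat) (x 0%nat)) < eps * h * Q h n pk n * Sk h n pk 0 / (1 - Q h n pk n) ->
  forall m, Cmod (Cminus (phi m) (x m)) < eps * h * Q h n pk n / (1 - Q h n pk n) * Smax h n pk.
Proof.
  intros Hh Hn HE HE1 He Hb Hs H0.
  set (E := Q h n pk n) in *.
  assert (Hind : forall m, Cmod (Cminus (phi m) (x m)) < eps * h * (E * Sk h n pk m / (1 - E))).
  { induction m.
    - replace (eps * h * (E * Sk h n pk 0 / (1 - E))) with (eps * h * E * Sk h n pk 0 / (1 - E)) by (field; lra). auto.
    - assert (Hd : Cminus (phi (S m)) (x (S m)) = Cplus (Cmult (aa h n pk m) (Cminus (phi m) (x m))) (ff h n pk phi m)).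
      { rewrite (sol_step h n pk x m Hh Hs). unfold ff. ring. }
      rewrite Hd. eapply Rle_lt_trans. apply Cmod_triangle. rewrite Cmod_mult.
      fold (al h n pk m).
      assert (Hf := ff_bound h n pk phi eps m Hh (Hb m)).
      assert (Ha : 0 < al h n pk m) by (apply al_pos; auto).
      assert (Hr := Sk_rec h n pk m Hn HE). fold E in Hr.
      assert (Sk h n pk (S m) = al h n pk m * Sk h n pk m - 1 + / E) by lra.
      rewrite H.
      replace (eps * h * (E * (al h n pk m * Sk h n pk m - 1 + / E) / (1 - E)))
        with (al h n pk m * (eps * h * (E * Sk h n pk m / (1 - E))) + h * eps) by (field; lra).
      apply Rmult_lt_compat_l with (r := al h n pk m) in IHm; auto. lra. }
  intros m. eapply Rlt_le_trans. apply Hind.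
  assert (Hs1 := Sk_le_Smax h n pk m Hn).
  replace (eps * h * E / (1 - E) * Smax h n pk) with (eps * h * (E * Smax h n pk / (1 - E))) by (field; lra).
  apply Rmult_le_compat_l. apply Rmult_le_pos; lra.
  unfold Rdiv. apply Rmult_le_compat_r. apply Rlt_le, Rinv_0_lt_compat; lra.
  apply Rmult_le_compat_l; lra.
Qed.

Definition RR h n pk m := Sk h n pk m * Q h n pk n / ((Q h n pk n - 1) * Q h n pk m).

Lemma RR_step h n pk m : (0 < n)%nat -> 1 < Q h n pk n ->
  RR h n pk m - RR h n pk (S m) = / Q h n pk (S m).
Proof.
  intros Hn HE. assert (HE0 : 0 < Q h n pk n) by lra.
  assert (Ha : 0 < al h n pk m) by (apply al_pos; auto).
  assert (Hq : 0 < Q h n pk m) by (apply Q_pos; auto).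
  assert (Hr := Sk_rec h n pk m Hn HE0).
  unfold RR. rewrite Q_S.
  assert (Sk h n pk (S m) = al h n pk m * Sk h n pk m - 1 + / Q h n pk n) by lra.
  rewrite H. field. repeat split; lra.
Qed.

Lemma RR_pos h n pk m : (0 < n)%nat -> 1 < Q h n pk n -> 0 < RR h n pk m.
Proof.
  intros Hn HE. unfold RR. assert (0 < Sk h n pk m) by (apply Sk_pos; auto; lra).
  assert (0 < Q h n pk m) by (apply Q_pos; auto; lra).
  apply Rdiv_lt_0_compat. apply Rmult_lt_0_compat; lra. apply Rmult_lt_0_compat; lra.
Qed.

Lemma RR_mono h n pk m k : (0 < n)%nat -> 1 < Q h n pk n -> RR h n pk (m + k) <= RR h n pk m.
Proof.
  intros Hn HE. induction k. rewrite Nat.add_0_r; lra.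
  rewrite Nat.add_succ_r. assert (H := RR_step h n pk (m + k) Hn HE).
  assert (0 < / Q h n pk (S (m + k))) by (apply Rinv_0_lt_compat, Q_pos; auto; lra). lra.
Qed.

Lemma Q_lower h n pk N : (0 < n)%nat -> 0 < Q h n pk n -> exists c, 0 < c /\ forall r, (r < N)%nat -> c <= Q h n pk r.
Proof.
  intros Hn HE. induction N. exists 1. split. lra. intros; lia.
  destruct IHN as [c [Hc H]]. exists (Rmin c (Q h n pk N)). split.
  apply Rmin_pos; auto. apply Q_pos; auto.
  intros r Hr. destruct (Nat.eq_dec r N). subst. apply Rmin_r.
  eapply Rle_trans. apply Rmin_l. apply H; lia.
Qed.

Lemma bernoulli x k : 1 <= x -> 1 + INR k * (x - 1) <= x ^ k.
Proof.
  intros Hx. induction k. simpl; lra. rewrite S_INR. simpl.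
  assert (0 <= INR k) by apply pos_INR.
  assert (0 <= INR k * (x-1)) by (apply Rmult_le_pos; lra). nra.
Qed.

Lemma Q_big h n pk M : (0 < n)%nat -> 1 < Q h n pk n -> exists N, forall m, (N <= m)%nat -> M <= Q h n pk m.
Proof.
  intros Hn HE. destruct (Q_lower h n pk n Hn ltac:(lra)) as [c [Hc Hcl]].
  destruct (INR_unbounded (M / (c * (Q h n pk n - 1)))) as [K HK].
  exists (K * n)%nat. intros m Hm.
  rewrite (Nat.div_mod_eq m n). rewrite Nat.mul_comm. rewrite Q_mul.
  assert (Hr : c <= Q h n pk (m mod n)) by (apply Hcl, Nat.mod_upper_bound; lia).
  assert (Hk : (K <= m / n)%nat).
  { rewrite <- (Nat.div_mul K n) by lia. apply Nat.Div0.div_le_mono. auto. }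
  apply le_INR in Hk.
  assert (Hb := bernoulli (Q h n pk n) (m / n) ltac:(lra)).
  set (E := Q h n pk n) in *. set (k := (m / n)%nat) in *.
  assert (HX : M <= c * (INR k * (E - 1))).
  { assert (Hp : 0 < c * (E - 1)) by (apply Rmult_lt_0_compat; lra).
    assert (HmM : M = M / (c * (E - 1)) * (c * (E - 1))) by (field; lra).
    assert (M / (c * (E - 1)) * (c * (E - 1)) < INR K * (c * (E - 1))) by (apply Rmult_lt_compat_r; lra).
    assert (INR K * (c * (E - 1)) <= INR k * (c * (E - 1))) by (apply Rmult_le_compat_r; lra).
    nra. }
  assert (0 <= INR k) by apply pos_INR.
  assert (0 <= E ^ k) by (apply pow_le; lra).
  assert (E ^ k * c <= E ^ k * Q h n pk (m mod n)) by (apply Rmult_le_compat_l; lra).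
  assert ((1 + INR k * (E - 1)) * c <= E ^ k * c) by (apply Rmult_le_compat_r; lra).
  nra.
Qed.

Lemma RR_small h n pk d : (0 < n)%nat -> 1 < Q h n pk n -> 0 < d ->
  exists N, forall m, (N <= m)%nat -> RR h n pk m < d.
Proof.
  intros Hn HE Hd.
  assert (HE0 : 0 < Q h n pk n) by lra.
  set (E := Q h n pk n) in *.
  assert (HS : 0 < Smax h n pk).
  { assert (0 < Sk h n pk 0) by (apply Sk_pos; auto; unfold E in HE; lra).
    assert (Sk h n pk 0 <= Smax h n pk) by (apply Sk_le_Smax; auto). lra. }
  destruct (Q_big h n pk (Smax h n pk * E / ((E - 1) * d) + 1) Hn HE) as [N HN].
  exists N. intros m Hm. specialize (HN m Hm).
  assert (Hq : 0 < Q h n pk m) by (apply Q_pos; auto).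
  assert (Hs := Sk_le_Smax h n pk m Hn).
  unfold RR. fold E.
  apply (Rmult_lt_reg_r ((E - 1) * Q h n pk m)). apply Rmult_lt_0_compat; lra.
  unfold Rdiv. rewrite Rmult_assoc, Rinv_l. 2: apply Rgt_not_eq, Rmult_lt_0_compat; lra.
  rewrite Rmult_1_r.
  assert (Hx : Smax h n pk * E / ((E - 1) * d) * ((E - 1) * d) = Smax h n pk * E) by (field; lra).
  assert (0 < (E-1) * d) by (apply Rmult_lt_0_compat; lra).
  assert (Sk h n pk m * E <= Smax h n pk * E) by (apply Rmult_le_compat_r; lra).
  assert (Smax h n pk * E / ((E - 1) * d) * ((E - 1) * d) < Q h n pk m * ((E-1) * d)).
  { apply Rmult_lt_compat_r; lra. }
  nra.
Qed.

Definition uu h n pk (phi : nat -> C) m : C := Cdiv (phi m) (ep h n pk m).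

Lemma uu_step h n pk phi m : (0 < n)%nat -> 0 < Q h n pk n ->
  Cminus (uu h n pk phi (S m)) (uu h n pk phi m) = Cdiv (ff h n pk phi m) (ep h n pk (S m)).
Proof.
  intros Hn HE. unfold uu, ff. rewrite ep_S.
  assert (H1 := ep_neq0 h n pk m Hn HE). assert (H2 := aa_neq0 h n pk m Hn HE).
  field. auto.
Qed.

Lemma Cmod_sub_sym a b : Cmod (Cminus a b) = Cmod (Cminus b a).
Proof. replace (Cminus a b) with (Copp (Cminus b a)) by ring. apply Cmod_opp. Qed.

Lemma Cmod_sub_tri a b c : Cmod (Cminus a c) <= Cmod (Cminus a b) + Cmod (Cminus b c).
Proof. replace (Cminus a c) with (Cplus (Cminus a b) (Cminus b c)) by ring. apply Cmod_triangle. Qed.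

Lemma uu_diff h n pk phi eps m k : 0 < h -> (0 < n)%nat -> 1 < Q h n pk n ->
  (forall m, Cmod (Cminus (Dh h phi m) (Cmult (pper n pk m) (phi m))) <= eps) ->
  Cmod (Cminus (uu h n pk phi (m + k)) (uu h n pk phi m)) <= h * eps * (RR h n pk m - RR h n pk (m + k)).
Proof.
  intros Hh Hn HE Hb. induction k.
  - rewrite Nat.add_0_r. replace (Cminus _ _) with (RtoC 0) by ring. rewrite Cmod_0. lra.
  - eapply Rle_trans. apply Cmod_sub_tri with (b := uu h n pk phi (m + k)).
    rewrite Nat.add_succ_r. rewrite uu_step by (auto; lra).
    rewrite Cmod_div by (apply ep_neq0; auto; lra).
    assert (Hf := ff_bound h n pk phi eps (m + k) Hh (Hb _)).
    assert (Hs := RR_step h n pk (m + k) Hn HE).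
    assert (Hq : 0 < Q h n pk (S (m + k))) by (apply Q_pos; auto; lra).
    fold (Q h n pk (S (m + k))).
    assert (Cmod (ff h n pk phi (m + k)) / Q h n pk (S (m + k)) <= h * eps / Q h n pk (S (m + k))).
    { unfold Rdiv. apply Rmult_le_compat_r. apply Rlt_le, Rinv_0_lt_compat; auto. auto. }
    assert (h * eps / Q h n pk (S (m + k)) = h * eps * (RR h n pk (m + k) - RR h n pk (S (m + k)))).
    { rewrite Hs. reflexivity. }
    lra.
Qed.

Lemma uu_diff2 h n pk phi eps m m' : 0 < h -> (0 < n)%nat -> 1 < Q h n pk n -> 0 < eps ->
  (forall m, Cmod (Cminus (Dh h phi m) (Cmult (pper n pk m) (phi m))) <= eps) ->
  (m <= m')%nat ->
  Cmod (Cminus (uu h n pk phi m') (uu h n pk phi m)) <= h * eps * RR h n pk m.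
Proof.
  intros Hh Hn HE He Hb Hm. replace m' with (m + (m' - m))%nat by lia.
  eapply Rle_trans. apply uu_diff; auto.
  assert (0 < RR h n pk (m + (m' - m))) by (apply RR_pos; auto).
  assert (0 < h * eps) by (apply Rmult_lt_0_compat; auto). nra.
Qed.

Lemma ball_of_Cmod (x y : C) (e : R) : Cmod (Cminus y x) < e -> ball x e y.
Proof. intros H. apply C_NormedModule_mixin_compat1. exact H. Qed.

Lemma Cmod_of_ball (x y : C) (e : posreal) : ball x e y -> Cmod (Cminus y x) < sqrt 2 * e.
Proof. intros H. apply (C_NormedModule_mixin_compat2 x y e). exact H. Qed.

Lemma part1_lim h n pk eps phi : 0 < h -> (0 < n)%nat -> 1 < Q h n pk n -> 0 < eps ->
  (forall m, Cmod (Cminus (Dh h phi m) (Cmult (pper n pk m) (phi m))) <= eps) ->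
  exists L : C,
    filterlim (uu h n pk phi) eventually (locally L) /\
    forall m, Cmod (Cminus (uu h n pk phi m) L) <= h * eps * RR h n pk m.
Proof.
  intros Hh Hn HE He Hb.
  assert (Hhe : 0 < h * eps) by (apply Rmult_lt_0_compat; auto).
  assert (Hc : exists L : CompleteNormedModule.CompleteSpace _ C_CompleteNormedModule,
             filterlim (uu h n pk phi) eventually (locally L)).
  { apply (@filterlim_locally_cauchy nat (CompleteNormedModule.CompleteSpace _ C_CompleteNormedModule) eventually eventually_filter).
    intros d. destruct (RR_small h n pk (d / (2 * (h * eps))) Hn HE) as [N HN].
    { apply Rdiv_lt_0_compat. apply cond_pos. lra. }
    exists (fun m => (N <= m)%nat). split. exists N; auto.
    intros u v Hu Hv. apply ball_of_Cmod.
    assert (HRN := HN N (Nat.le_refl N)).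
    assert (h * eps * RR h n pk N < d / 2).
    { apply (Rmult_lt_compat_l (h * eps)) in HRN; auto.
      replace (h * eps * (d / (2 * (h * eps)))) with (d / 2) in HRN by (field; lra). lra. }
    assert (Hu' := uu_diff2 h n pk phi eps N u Hh Hn HE He Hb Hu).
    assert (Hv' := uu_diff2 h n pk phi eps N v Hh Hn HE He Hb Hv).
    eapply Rle_lt_trans. apply Cmod_sub_tri with (b := uu h n pk phi N).
    rewrite (Cmod_sub_sym (uu h n pk phi N)).
    assert (0 < h * eps * RR h n pk N) by (apply Rmult_lt_0_compat; auto; apply RR_pos; auto).
    lra. }
  destruct Hc as [L HL]. exists L. split. exact HL.
  intros m. apply Rle_plus_epsilon. intros d Hd.
  assert (Hd' : 0 < d / sqrt 2) by (apply Rdiv_lt_0_compat; auto; apply sqrt_lt_R0; lra).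
  apply filterlim_locally with (eps := mkposreal _ Hd') in HL.
  destruct HL as [N HN].
  specialize (HN (Nat.max N m) (Nat.le_max_l _ _)).
  apply Cmod_of_ball in HN. simpl in HN.
  replace (sqrt 2 * (d / sqrt 2)) with d in HN by (field; apply Rgt_not_eq, sqrt_lt_R0; lra).
  assert (H2 := uu_diff2 h n pk phi eps m (Nat.max N m) Hh Hn HE He Hb (Nat.le_max_r _ _)).
  eapply Rle_trans. apply Cmod_sub_tri with (b := uu h n pk phi (Nat.max N m)).
  rewrite Cmod_sub_sym. lra.
Qed.

Definition KK h n pk := h * Q h n pk n / (-1 + Q h n pk n) * Smax h n pk.

Lemma phi_decomp h n pk phi L m : (0 < n)%nat -> 0 < Q h n pk n ->
  Cminus (phi m) (Cmult L (ep h n pk m)) = Cmult (ep h n pk m) (Cminus (uu h n pk phi m) L).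
Proof. intros Hn HE. unfold uu. assert (H := ep_neq0 h n pk m Hn HE). field. auto. Qed.

Lemma QRR h n pk m : (0 < n)%nat -> 1 < Q h n pk n ->
  Q h n pk m * RR h n pk m = Sk h n pk m * Q h n pk n / (Q h n pk n - 1).
Proof.
  intros Hn HE. unfold RR. assert (0 < Q h n pk m) by (apply Q_pos; auto; lra). field. split; lra.
Qed.

Lemma bound_from h n pk phi eps L m : 0 < h -> (0 < n)%nat -> 1 < Q h n pk n -> 0 < eps ->
  Cmod (Cminus (uu h n pk phi m) L) <= h * eps * RR h n pk m ->
  Cmod (Cminus (phi m) (Cmult L (ep h n pk m))) <= KK h n pk * eps.
Proof.
  intros Hh Hn HE He H.
  rewrite phi_decomp by (auto; lra). rewrite Cmod_mult. fold (Q h n pk m).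
  assert (Hq : 0 < Q h n pk m) by (apply Q_pos; auto; lra).
  apply Rmult_le_compat_l with (r := Q h n pk m) in H; [|lra].
  eapply Rle_trans. apply H.
  replace (Q h n pk m * (h * eps * RR h n pk m)) with (h * eps * (Q h n pk m * RR h n pk m)) by ring.
  rewrite QRR by auto. unfold KK.
  assert (Hs := Sk_le_Smax h n pk m Hn).
  replace (h * Q h n pk n / (-1 + Q h n pk n) * Smax h n pk * eps)
    with (h * eps * (Smax h n pk * Q h n pk n / (Q h n pk n - 1))) by (field; lra).
  apply Rmult_le_compat_l. apply Rlt_le, Rmult_lt_0_compat; auto.
  unfold Rdiv. apply Rmult_le_compat_r. apply Rlt_le, Rinv_0_lt_compat; lra.
  apply Rmult_le_compat_r; lra.
Qed.

Lemma zero_mult h n pk c B : (0 < n)%nat -> 1 < Q h n pk n ->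
  (forall m, Cmod (Cmult c (ep h n pk m)) <= B) -> c = RtoC 0.
Proof.
  intros Hn HE H. apply Cmod_eq_0.
  destruct (Cmod_ge_0 c) as [Hc|Hc]; [|auto].
  exfalso. destruct (Q_big h n pk (B / Cmod c + 1) Hn HE) as [N HN].
  specialize (HN N (Nat.le_refl _)). specialize (H N). rewrite Cmod_mult in H. fold (Q h n pk N) in H.
  apply Rmult_le_compat_l with (r := Cmod c) in HN; [|lra].
  replace (Cmod c * (B / Cmod c + 1)) with (B + Cmod c) in HN by (field; lra). lra.
Qed.

Lemma unique_sol h n pk phi L y K : 0 < h -> (0 < n)%nat -> 1 < Q h n pk n ->
  is_solution h n pk y ->
  (forall m, Cmod (Cminus (phi m) (y m)) <= K) ->
  (forall m, Cmod (Cminus (phi m) (Cmult L (ep h n pk m))) <= K) ->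
  forall m, y m = Cmult L (ep h n pk m).
Proof.
  intros Hh Hn HE Hs H1 H2.
  assert (Hz : Cminus (y 0%nat) L = RtoC 0).
  { apply (zero_mult h n pk _ (K + K) Hn HE). intros m.
    replace (Cmult (Cminus (y 0%nat) L) (ep h n pk m)) with
      (Cminus (Cminus (phi m) (Cmult L (ep h n pk m))) (Cminus (phi m) (y m))).
    2:{ rewrite (sol_form h n pk y m Hh Hs). ring. }
    eapply Rle_trans. replace (Cminus (Cminus (phi m) (Cmult L (ep h n pk m))) (Cminus (phi m) (y m)))
      with (Cplus (Cminus (phi m) (Cmult L (ep h n pk m))) (Copp (Cminus (phi m) (y m)))) by ring.
    apply Cmod_triangle. rewrite Cmod_opp. specialize (H1 m). specialize (H2 m). lra. }
  intros m. rewrite (sol_form h n pk y m Hh Hs).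
  replace (y 0%nat) with (Cplus (Cminus (y 0%nat) L) L) by ring. rewrite Hz. ring.
Qed.

Fixpoint phis h n pk (m : nat) : C :=
  match m with
  | O => RtoC 0
  | S m => Cplus (Cmult (aa h n pk m) (phis h n pk m))
                 (Cmult (RtoC h) (Cdiv (ep h n pk (S m)) (RtoC (Q h n pk (S m)))))
  end.

Lemma ff_phis h n pk m : ff h n pk (phis h n pk) m = Cmult (RtoC h) (Cdiv (ep h n pk (S m)) (RtoC (Q h n pk (S m)))).
Proof. unfold ff. simpl. ring. Qed.

Lemma RtoC_neq0' x : 0 < x -> RtoC x <> RtoC 0.
Proof. intros H. apply RtoC_neq0. lra. Qed.

Lemma phis_bound h n pk m : 0 < h -> (0 < n)%nat -> 0 < Q h n pk n ->
  Cmod (Cminus (Dh h (phis h n pk) m) (Cmult (pper n pk m) (phis h n pk m))) <= 1.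
Proof.
  intros Hh Hn HE.
  assert (Hh' := RtoC_neq0' h Hh).
  assert (Hq : 0 < Q h n pk (S m)) by (apply Q_pos; auto).
  assert (Eq : Cminus (Dh h (phis h n pk) m) (Cmult (pper n pk m) (phis h n pk m)) = Cdiv (ff h n pk (phis h n pk) m) (RtoC h)).
  { unfold Dh, ff, aa. field. auto. }
  rewrite Eq, ff_phis.
  replace (Cdiv (Cmult (RtoC h) (Cdiv (ep h n pk (S m)) (RtoC (Q h n pk (S m))))) (RtoC h))
    with (Cdiv (ep h n pk (S m)) (RtoC (Q h n pk (S m)))) by (field; split; auto; apply RtoC_neq0'; auto).
  rewrite Cmod_div by (apply RtoC_neq0'; auto). rewrite Cmod_R, Rabs_pos_eq by lra.
  fold (Q h n pk (S m)). right. field. lra.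
Qed.

Lemma uu_phis_step h n pk m : 0 < h -> (0 < n)%nat -> 1 < Q h n pk n ->
  Cminus (uu h n pk (phis h n pk) (S m)) (uu h n pk (phis h n pk) m)
  = RtoC (h * (RR h n pk m - RR h n pk (S m))).
Proof.
  intros Hh Hn HE. rewrite uu_step by (auto; lra). rewrite ff_phis. rewrite RR_step by auto.
  assert (Hq : 0 < Q h n pk (S m)) by (apply Q_pos; auto; lra).
  assert (He := ep_neq0 h n pk (S m) Hn ltac:(lra)).
  rewrite RtoC_mult, RtoC_inv by lra. field. split; auto. apply RtoC_neq0'; auto.
Qed.

Lemma uu_phis_tele h n pk m k : 0 < h -> (0 < n)%nat -> 1 < Q h n pk n ->
  Cminus (uu h n pk (phis h n pk) (m + k)) (uu h n pk (phis h n pk) m)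
  = RtoC (h * (RR h n pk m - RR h n pk (m + k))).
Proof.
  intros Hh Hn HE. induction k.
  - rewrite Nat.add_0_r. replace (RR h n pk m - RR h n pk m) with 0 by ring.
    rewrite Rmult_0_r. ring.
  - rewrite Nat.add_succ_r.
    replace (Cminus (uu h n pk (phis h n pk) (S (m + k))) (uu h n pk (phis h n pk) m))
      with (Cplus (Cminus (uu h n pk (phis h n pk) (S (m + k))) (uu h n pk (phis h n pk) (m + k)))
                  (Cminus (uu h n pk (phis h n pk) (m + k)) (uu h n pk (phis h n pk) m))) by ring.
    rewrite uu_phis_step, IHk by auto. rewrite <- RtoC_plus. f_equal. ring.
Qed.

Lemma phis_lower h n pk L m : 0 < h -> (0 < n)%nat -> 1 < Q h n pk n ->
  (forall m, Cmod (Cminus (uu h n pk (phis h n pk) m) L) <= h * 1 * RR h n pk m) ->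
  h * RR h n pk m <= Cmod (Cminus (uu h n pk (phis h n pk) m) L).
Proof.
  intros Hh Hn HE HL. apply Rle_plus_epsilon. intros d Hd.
  destruct (RR_small h n pk (d / (2 * h)) Hn HE) as [N HN].
  { apply Rdiv_lt_0_compat; lra. }
  set (m' := Nat.max N m).
  assert (HR := HN m' (Nat.le_max_l _ _)).
  assert (Hm' : m' = (m + (m' - m))%nat) by (unfold m'; lia).
  assert (Ht := uu_phis_tele h n pk m (m' - m) Hh Hn HE). rewrite <- Hm' in Ht.
  assert (Hp : 0 < RR h n pk m') by (apply RR_pos; auto).
  assert (Hp2 : 0 < RR h n pk m) by (apply RR_pos; auto).
  assert (E1 : RtoC (h * RR h n pk m) = Cplus (Cminus (uu h n pk (phis h n pk) m') (uu h n pk (phis h n pk) m)) (RtoC (h * RR h n pk m'))).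
  { rewrite Ht. rewrite <- RtoC_plus. f_equal. ring. }
  assert (E2 : h * RR h n pk m = Cmod (RtoC (h * RR h n pk m))).
  { rewrite Cmod_R, Rabs_pos_eq. auto. apply Rmult_le_pos; lra. }
  rewrite E2, E1. eapply Rle_trans. apply Cmod_triangle.
  rewrite Cmod_R, Rabs_pos_eq by (apply Rmult_le_pos; lra).
  assert (T := Cmod_sub_tri (uu h n pk (phis h n pk) m') L (uu h n pk (phis h n pk) m)).
  rewrite (Cmod_sub_sym L) in T.
  assert (H1 := HL m').
  assert (h * RR h n pk m' < d / 2).
  { apply (Rmult_lt_compat_l h) in HR; auto. replace (h * (d / (2 * h))) with (d / 2) in HR by (field; lra). lra. }
  lra.
Qed.

Lemma KK_pos h n pk : 0 < h -> (0 < n)%nat -> 1 < Q h n pk n -> 0 < KK h n pk.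
Proof.
  intros Hh Hn HE. unfold KK.
  assert (0 < Sk h n pk 0) by (apply Sk_pos; auto; lra).
  assert (Sk h n pk 0 <= Smax h n pk) by (apply Sk_le_Smax; auto).
  apply Rmult_lt_0_compat; [|lra]. apply Rdiv_lt_0_compat; [|lra]. apply Rmult_lt_0_compat; lra.
Qed.

Lemma not_ulam h n pk K' : 0 < h -> (0 < n)%nat -> 1 < Q h n pk n -> K' < KK h n pk ->
  ~ ulam_constant h n pk K'.
Proof.
  intros Hh Hn HE HK [HK' Hu].
  destruct (Hu 1 Rlt_0_1 (phis h n pk) (fun m => phis_bound h n pk m Hh Hn ltac:(lra))) as [x [Hx Hxb]].
  destruct (part1_lim h n pk 1 (phis h n pk) Hh Hn HE Rlt_0_1 (fun m => phis_bound h n pk m Hh Hn ltac:(lra))) as [L [_ HL]].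
  assert (Hb : forall m, Cmod (Cminus (phis h n pk m) (Cmult L (ep h n pk m))) <= KK h n pk * 1).
  { intros m. exact (bound_from h n pk (phis h n pk) 1 L m Hh Hn HE Rlt_0_1 (HL m)). }
  assert (Hxb' : forall m, Cmod (Cminus (phis h n pk m) (x m)) <= KK h n pk * 1).
  { intros m. specialize (Hxb m). lra. }
  assert (Hxe := unique_sol h n pk (phis h n pk) L x (KK h n pk * 1) Hh Hn HE Hx Hxb' Hb).
  destruct (Smax_attained h n pk Hn ltac:(lra)) as [k [Hk HSk]].
  specialize (Hxb k). rewrite Hxe in Hxb. rewrite phi_decomp in Hxb by (auto; lra).
  rewrite Cmod_mult in Hxb. fold (Q h n pk k) in Hxb.
  assert (Hlow := phis_lower h n pk L k Hh Hn HE HL).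
  assert (Hq : 0 < Q h n pk k) by (apply Q_pos; auto; lra).
  apply Rmult_le_compat_l with (r := Q h n pk k) in Hlow; [|lra].
  replace (Q h n pk k * (h * RR h n pk k)) with (h * (Q h n pk k * RR h n pk k)) in Hlow by ring.
  rewrite QRR in Hlow by auto. rewrite HSk in Hlow.
  assert (KK h n pk = h * (Smax h n pk * Q h n pk n / (Q h n pk n - 1))) by (unfold KK; field; lra).
  lra.
Qed.

Theorem theorem4p3 (h : R) (n : nat) (pk : nat -> C) (eps : R) (phi : nat -> C) :
  0 < h ->
  (0 < n)%nat ->
  (forall k : nat, (k < n)%nat -> pk k <> RtoC (- / h)) ->
  (* p has minimal period n *)
  (forall d : nat, (0 < d < n)%nat -> ~ (forall m : nat, pper n pk (m + d) = pper n pk m)) ->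
  0 < Cmod (ep h n pk n) ->
  Cmod (ep h n pk n) <> 1 ->
  0 < eps ->
  (forall m : nat, Cmod (Cminus (Dh h phi m) (Cmult (pper n pk m) (phi m))) <= eps) ->
  (* (i) *)
  (1 < Cmod (ep h n pk n) ->
    let Kn := h * Cmod (ep h n pk n) / (-1 + Cmod (ep h n pk n)) * Smax h n pk in
    exists L : C,
      filterlim (fun m => Cdiv (phi m) (ep h n pk m)) eventually (locally L) /\
      is_solution h n pk (fun m => Cmult L (ep h n pk m)) /\
      (forall m : nat, Cmod (Cminus (phi m) (Cmult L (ep h n pk m))) <= Kn * eps) /\
      (forall y : nat -> C, is_solution h n pk y ->
         (forall m : nat, Cmod (Cminus (phi m) (y m)) <= Kn * eps) ->
         forall m : nat, y m = Cmult L (ep h n pk m)) /\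
      min_ulam_constant h n pk Kn) /\
  (* (ii) *)
  (Cmod (ep h n pk n) < 1 ->
    forall x : nat -> C, is_solution h n pk x ->
      Cmod (Cminus (phi 0%nat) (x 0%nat))
        < eps * h * Cmod (ep h n pk n) * Sk h n pk 0 / (1 - Cmod (ep h n pk n)) ->
      forall m : nat, Cmod (Cminus (phi m) (x m))
        < eps * h * Cmod (ep h n pk n) / (1 - Cmod (ep h n pk n)) * Smax h n pk).
Proof.
  intros Hh Hn _ _ HE0 _ He Hb. split.
  - intros HE1 Kn.
    assert (HK : Kn = KK h n pk) by reflexivity. rewrite HK. clear HK Kn.
    change (1 < Q h n pk n) in HE1.
    destruct (part1_lim h n pk eps phi Hh Hn HE1 He Hb) as [L [Hlim HL]].
    exists L. split; [exact Hlim|]. split; [apply mult_ep_sol; auto|].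
    assert (Hbd : forall m, Cmod (Cminus (phi m) (Cmult L (ep h n pk m))) <= KK h n pk * eps).
    { intros m. apply bound_from; auto. }
    split; [exact Hbd|]. split.
    { intros y Hy Hyb. apply (unique_sol h n pk phi L y (KK h n pk * eps)); auto. }
    split.
    + split. apply KK_pos; auto.
      intros eps' He' phi' Hb'.
      destruct (part1_lim h n pk eps' phi' Hh Hn HE1 He' Hb') as [L' [_ HL']].
      exists (fun m => Cmult L' (ep h n pk m)). split. apply mult_ep_sol; auto.
      intros m. apply bound_from; auto.
    + intros K' _ HK'. apply not_ulam; auto.
  - intros HE1 x Hs H0. apply part2; auto.
Qed.
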